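(* The logic $\mathsf{CK}\oplus\mathsf{C}_\Diamond\oplus\mathsf{I}_{\Diamond\Box}$ is a conservative extension of $\mathsf{CK}_\Box$: a $\Diamond$-free formula is derivable in $\mathsf{CK}\oplus\mathsf{C}_\Diamond\oplus\mathsf{I}_{\Diamond\Box}$ if and only if it is a theorem of $\mathsf{CK}_\Box$.
   Context: Formulas: $\mathbf{L}$ is generated from a countably infinite set of propositional variables by $\varphi ::= p \mid \bot \mid \varphi\wedge\varphi \mid \varphi\vee\varphi \mid \varphi\to\varphi \mid \Box\varphi \mid \Diamond\varphi$; $\neg\varphi:=\varphi\to\bot$. Axioms: $\mathsf{K}_\Box$: $\Box(\varphi\to\psi)\to(\Box\varphi\to\Box\psi)$; $\mathsf{K}_\Diamond$: $\Box(\varphi\to\psi)\to(\Diamond\varphi\to\Diamond\psi)$; $\mathsf{C}_\Diamond$: $\Diamond(\varphi\vee\psi)\to\Diamond\varphi\vee\Diamond\psi$; $\mathsf{I}_{\Diamond\Box}$: $(\Diamond\varphi\to\Box\psi)\to\Box(\varphi\to\psi)$. For a set $\mathsf{Ax}$ of axioms, $\mathsf{CK}\oplus\mathsf{Ax}$ is the relation $\Gamma\vdash_{\mathsf{Ax}}\varphi$ inductively generated by: (Ax) $\Gamma\vdash\varphi$ whenever $\varphi$ is a substitution instance of an axiom of a standard Hilbert axiomatisation of intuitionistic propositional logic, of $\mathsf{K}_\Box$, of $\mathsf{K}_\Diamond$, or of an element of $\mathsf{Ax}$; (El) $\Gamma\vdash\varphi$ if $\varphi\in\Gamma$; (MP)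 from $\Gamma\vdash\varphi$ and $\Gamma\vdash\varphi\to\psi$ infer $\Gamma\vdash\psi$; (Nec) from $\emptyset\vdash\varphi$ infer $\Gamma\vdash\Box\varphi$. A formula is derivable if $\emptyset\vdash_{\mathsf{Ax}}\varphi$. $\mathsf{CK}_\Box$ is the logic on $\Diamond$-free formulas axiomatised by intuitionistic propositional logic plus $\mathsf{K}_\Box$, closed under modus ponens and necessitation (from $\varphi$ infer $\Box\varphi$). A logic is a conservative extension of $\mathsf{CK}_\Box$ if its derivable $\Diamond$-free formulas are exactly the theorems of $\mathsf{CK}_\Box$. *)

(* Defs.v *)
Inductive form : Type :=
| Var : nat -> form
| Bot : form
| And : form -> form -> form
| Or  : form -> form -> form
| Imp : form -> form -> form
| Box : form -> form
| Dia : form -> form.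

Definition Neg (a : form) : form := Imp a Bot.

Fixpoint diafree (a : form) : Prop :=
  match a with
  | Var _ | Bot => True
  | And b c | Or b c | Imp b c => diafree b /\ diafree c
  | Box b => diafree b
  | Dia _ => False
  end.

Inductive IPC_ax : form -> Prop :=
| IA1 a b : IPC_ax (Imp a (Imp b a))
| IA2 a b c : IPC_ax (Imp (Imp a (Imp b c)) (Imp (Imp a b) (Imp a c)))
| IA3 a b : IPC_ax (Imp (And a b) a)
| IA4 a b : IPC_ax (Imp (And a b) b)
| IA5 a b : IPC_ax (Imp a (Imp b (And a b)))
| IA6 a b : IPC_ax (Imp a (Or a b))
| IA7 a b : IPC_ax (Imp b (Or a b))
| IA8 a b c : IPC_ax (Imp (Imp a c) (Imp (Imp b c) (Imp (Or a b) c)))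
| IA9 a : IPC_ax (Imp Bot a).

Inductive KBox_ax : form -> Prop :=
| KBox a b : KBox_ax (Imp (Box (Imp a b)) (Imp (Box a) (Box b))).

Inductive KDia_ax : form -> Prop :=
| KDia a b : KDia_ax (Imp (Box (Imp a b)) (Imp (Dia a) (Dia b))).

Inductive CDia_ax : form -> Prop :=
| CDia a b : CDia_ax (Imp (Dia (Or a b)) (Or (Dia a) (Dia b))).

Inductive IDiaBox_ax : form -> Prop :=
| IDiaBox a b : IDiaBox_ax (Imp (Imp (Dia a) (Box b)) (Box (Imp a b))).

Inductive CK_deriv (Ax : form -> Prop) : (form -> Prop) -> form -> Prop :=
| D_ipc G a : IPC_ax a -> CK_deriv Ax G a
| D_kbox G a : KBox_ax a -> CK_deriv Ax G a
| D_kdia G a : KDia_ax a -> CK_deriv Ax G a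
| D_extra G a : Ax a -> CK_deriv Ax G a
| D_el (G : form -> Prop) a : G a -> CK_deriv Ax G a
| D_mp G a b : CK_deriv Ax G a -> CK_deriv Ax G (Imp a b) -> CK_deriv Ax G b
| D_nec G a : CK_deriv Ax (fun _ => False) a -> CK_deriv Ax G (Box a).

Definition Ax_C_I (a : form) : Prop := CDia_ax a \/ IDiaBox_ax a.

Definition derivable (Ax : form -> Prop) (a : form) : Prop :=
  CK_deriv Ax (fun _ => False) a.

Inductive CKBox_thm : form -> Prop :=
| B_ipc a : diafree a -> IPC_ax a -> CKBox_thm a
| B_kbox a : diafree a -> KBox_ax a -> CKBox_thm a
| B_mp a b : CKBox_thm a -> CKBox_thm (Imp a b) -> CKBox_thm b
| B_nec a : CKBox_thm a -> CKBox_thm (Box a).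

(* Main.v *)
Require Import Defs.

Fixpoint tr (a : form) : form :=
  match a with
  | Var n => Var n
  | Bot => Bot
  | And b c => And (tr b) (tr c)
  | Or b c => Or (tr b) (tr c)
  | Imp b c => Imp (tr b) (tr c)
  | Box b => Box (tr b)
  | Dia _ => Imp Bot Bot
  end.

Lemma tr_df : forall a, diafree (tr a).
Proof. induction a; simpl; tauto. Qed.

Lemma tr_id : forall a, diafree a -> tr a = a.
Proof.
  induction a; simpl; intros H; try tauto;
  try (destruct H; f_equal; auto); f_equal; auto.
Qed.

Ltac df := repeat (simpl; split); auto using tr_df; exact I.

Lemma Kr : forall a b, diafree a -> diafree b -> CKBox_thm b -> CKBox_thm (Imp a b).
Proof.
  intros a b Ha Hb H. apply (B_mp b); auto. apply B_ipc. simpl; tauto. constructor.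
Qed.

Lemma idt : forall a, diafree a -> CKBox_thm (Imp a a).
Proof.
  intros a Ha.
  apply (B_mp (Imp a (Imp a a))).
  - apply B_ipc. simpl; tauto. constructor.
  - apply (B_mp (Imp a (Imp (Imp a a) a))).
    + apply B_ipc. simpl; tauto. constructor.
    + apply B_ipc. simpl; tauto. constructor.
Qed.

Lemma top : CKBox_thm (Imp Bot Bot).
Proof. apply B_ipc. simpl; tauto. constructor. Qed.

Lemma trans : forall a b c, diafree a -> diafree b -> diafree c ->
  CKBox_thm (Imp a b) -> CKBox_thm (Imp b c) -> CKBox_thm (Imp a c).
Proof.
  intros a b c Ha Hb Hc H1 H2.
  assert (H3 : CKBox_thm (Imp a (Imp b c))) by (apply Kr; simpl; tauto).
  apply (B_mp (Imp a b)); auto.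
  apply (B_mp (Imp a (Imp b c))); auto.
  apply B_ipc. simpl; tauto. constructor.
Qed.

Lemma sound : forall G a, CK_deriv Ax_C_I G a -> (forall x, G x -> False) ->
  CKBox_thm (tr a).
Proof.
  intros G a D. induction D; intros HG.
  - destruct H; apply B_ipc; simpl; try constructor; repeat split; apply tr_df.
  - destruct H; apply B_kbox; simpl; try constructor; repeat split; apply tr_df.
  - destruct H; simpl. apply Kr. simpl; repeat split; apply tr_df. simpl; tauto.
    apply Kr; simpl; try tauto. apply top.
  - destruct H as [H|H]; destruct H; simpl.
    + apply B_ipc. simpl; tauto. constructor.
    + pose proof (tr_df a) as Ha. pose proof (tr_df b) as Hb.
      set (T := Imp Bot Bot).
      apply (trans _ (Box (tr b))); try (simpl; tauto).
      * (* (T -> x) -> x *)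
        set (x := Box (tr b)).
        apply (B_mp (Imp (Imp T x) T)).
        { apply Kr. simpl; tauto. simpl; tauto. apply top. }
        apply (B_mp (Imp (Imp T x) (Imp T x))).
        { apply idt. simpl; tauto. }
        apply B_ipc. simpl; tauto. constructor.
      * apply (B_mp (Box (Imp (tr b) (Imp (tr a) (tr b))))).
        { apply B_nec. apply B_ipc. simpl; tauto. constructor. }
        apply B_kbox. simpl; tauto. constructor.
  - exfalso; eauto.
  - simpl in *. eapply B_mp; [apply IHD1|apply IHD2]; auto.
  - simpl. apply B_nec. apply IHD; intros x Hx; exact Hx.
Qed.

Lemma compl : forall a, CKBox_thm a -> derivable Ax_C_I a.
Proof.
  unfold derivable. intros a H; induction H.
  - apply D_ipc; auto.
  - apply D_kbox; auto.
  - apply (D_mp _ _ a b); assumption.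
  - apply D_nec; auto.
Qed.

Theorem mainTheorem11 :
  forall a : form, diafree a ->
    (derivable Ax_C_I a <-> CKBox_thm a).
Proof.
  intros a Ha; split.
  - intro D. rewrite <- (tr_id a Ha). eapply sound; eauto.
  - apply compl.
Qed.
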